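(* Let $(X,d,f)$ be a TDS. Then for all $\alpha>0$, $$\sup_{\mu\in M(X,f)}\underline h^{BK}_\mu(f,\alpha)\le h^\alpha_{top}(f,X).$$
   Context: A TDS $(X,d,f)$: compact metric space and continuous $f$; $M(X,f)$ is the set of $f$-invariant Borel probability measures. $d_n^\alpha(x,y)=\max_{0\le i\le n-1}e^{\alpha i}d(f^ix,f^iy)$; $B_n^\alpha(x,\varepsilon)=\{y:d_n^\alpha(x,y)<\varepsilon\}$. Lower $\alpha$-local Brin–Katok entropy: $\underline h^{BK}_\mu(f,\alpha)=\int_X\lim_{\varepsilon\to0}\liminf_{n\to\infty}\frac{-\log\mu(B_n^\alpha(x,\varepsilon))}{n}\,d\mu(x)$. $\alpha$-topological entropy: $E\subset X$ is $(n,\alpha,\varepsilon)$-spanning if every $x\in X$ has $y\in E$ with $d_n^\alpha(x,y)<\varepsilon$; $r_n(f,\alpha,X,\varepsilon)$ is the minimal cardinality of such a set; $h^\alpha_{top}(f,X)=\lim_{\varepsilon\to0}\limsup_{n\to\infty}\frac1n\log r_n(f,\alpha,X,\varepsilon)$. *)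

(* Defs.v *)
From HB Require Import structures.
From mathcomp Require Import all_boot all_order all_algebra.
From mathcomp Require Import finmap.
From mathcomp Require Import all_classical all_reals all_analysis.
Set Implicit Arguments. Unset Strict Implicit. Unset Printing Implicit Defensive.
Import Order.TTheory GRing.Theory Num.Theory.
Local Open Scope classical_set_scope.
Local Open Scope ring_scope.

Definition is_metric (R : realType) (X : Type) (dist : X -> X -> R) : Prop :=
  [/\ forall x y, dist x y = 0 <-> x = y,
      forall x y, dist x y = dist y x &
      forall x y z, dist x z <= dist x y + dist y z].

Definition d_open (R : realType) (X : Type) (dist : X -> X -> R) (A : set X) : Prop :=
  forall x, A x -> exists2 e : R, 0 < e & forall y, dist x y < e -> A y.

Definition d_compact (R : realType) (X : Type) (dist : X -> X -> R) : Prop :=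
  forall (I : Type) (U : I -> set X),
    (forall i, d_open dist (U i)) -> (forall x, exists i, U i x) ->
    exists2 J : set I, finite_set J & forall x, exists2 i, J i & U i x.

Definition d_continuous (R : realType) (X : Type) (dist : X -> X -> R)
  (f : X -> X) : Prop :=
  forall x (e : R), 0 < e -> exists2 del : R, 0 < del &
    forall y, dist x y < del -> dist (f x) (f y) < e.

Definition dna (R : realType) (X : Type) (dist : X -> X -> R) (f : X -> X)
  (alpha : R) (n : nat) (x y : X) : R :=
  \big[Num.max/0]_(i < n) (expR (alpha * i%:R) * dist (iter i f x) (iter i f y)).

Definition bowen_ball (R : realType) (X : Type) (dist : X -> X -> R) (f : X -> X)
  (alpha : R) (n : nat) (x : X) (eps : R) : set X :=
  [set y | dna dist f alpha n x y < eps].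

Definition neglog (R : realType) (m : \bar R) : \bar R :=
  if m == 0%E then +oo%E else (- ln (fine m))%:E.

Definition invariant (R : realType) (dm : measure_display) (X : measurableType dm)
  (f : X -> X) (mu : probability X R) : Prop :=
  forall A : set X, measurable A -> mu (f @^-1` A) = mu A.

Definition bk_local (R : realType) (dm : measure_display) (X : measurableType dm)
  (dist : X -> X -> R) (f : X -> X) (mu : probability X R) (alpha : R) (x : X)
  : \bar R :=
  lim ((fun eps : R => limn_einf (fun n : nat =>
          (((n%:R)^-1)%:E * neglog (mu (bowen_ball dist f alpha n x eps)))%E))
       @ 0^'+).

Definition lower_bk (R : realType) (dm : measure_display) (X : measurableType dm)
  (dist : X -> X -> R) (f : X -> X) (mu : probability X R) (alpha : R) : \bar R :=
  (\int[mu]_x bk_local dist f mu alpha x)%E.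

Definition spanning (R : realType) (X : choiceType) (dist : X -> X -> R)
  (f : X -> X) (alpha : R) (n : nat) (eps : R) (E : {fset X}) : Prop :=
  forall x : X, exists2 y, y \in E & dna dist f alpha n x y < eps.

(* r_n(f,alpha,X,eps): minimal cardinality of a spanning set (+oo if none) *)
Definition rn (R : realType) (X : choiceType) (dist : X -> X -> R)
  (f : X -> X) (alpha : R) (n : nat) (eps : R) : \bar R :=
  ereal_inf [set ((#|` E|)%:R)%:E | E in [set E | spanning dist f alpha n eps E]].

Definition elog (R : realType) (r : \bar R) : \bar R :=
  match r with
  | r%:E => (ln r)%:E
  | +oo%E => +oo%E
  | -oo%E => -oo%E
  end.

Definition htop (R : realType) (X : choiceType) (dist : X -> X -> R)
  (f : X -> X) (alpha : R) : \bar R :=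
  lim ((fun eps : R => limn_esup (fun n : nat =>
          (((n%:R)^-1)%:E * elog (rn dist f alpha n eps))%E))
       @ 0^'+).

Definition Minv (R : realType) (dm : measure_display) (X : measurableType dm)
  (f : X -> X) : set (probability X R) :=
  [set mu : probability X R | invariant f mu].

(* Main.v *)
Require Import Defs.
From HB Require Import structures.
From mathcomp Require Import all_boot all_order all_algebra.
From mathcomp Require Import finmap.
From mathcomp Require Import all_classical all_reals all_analysis.
From mathcomp Require Import lra measurable_realfun.
Import Order.TTheory GRing.Theory Num.Theory.
Local Open Scope classical_set_scope.
Local Open Scope ring_scope.
Section Metric.
Variables (R : realType) (X : Type) (dist : X -> X -> R) (f : X -> X).
Hypothesis hm : is_metric dist.
Hypothesis hf : d_continuous dist f.
Variable alpha : R.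

Lemma dist_sym x y : dist x y = dist y x.
Proof. by case: hm. Qed.
Lemma dist_tri x y z : dist x z <= dist x y + dist y z.
Proof. by case: hm. Qed.
Lemma dist_xx x : dist x x = 0.
Proof. by case: hm => h _ _; apply/h. Qed.
Lemma dist_ge0 x y : 0 <= dist x y.
Proof.
have := dist_tri x y x; rewrite dist_xx (dist_sym y x) => h.
by rewrite -(@pmulr_rge0 _ 2)// mulr2n mulrDl mul1r.
Qed.

Lemma dna_ge0 n x y : 0 <= dna dist f alpha n x y.
Proof.
rewrite /dna; elim/big_ind: _ => //; first by move=> a b ha hb; rewrite le_max ha.
by move=> i _; rewrite mulr_ge0 ?expR_ge0 ?dist_ge0.
Qed.

Lemma le_dna n x y (i : 'I_n) :
  expR (alpha * i%:R) * dist (iter i f x) (iter i f y) <= dna dist f alpha n x y.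
Proof. exact: le_bigmax. Qed.

Lemma dna_le n x y r : 0 <= r ->
  (forall i : 'I_n, expR (alpha * i%:R) * dist (iter i f x) (iter i f y) <= r) ->
  dna dist f alpha n x y <= r.
Proof. by move=> r0 h; apply: bigmax_le. Qed.

Lemma dna_sym n x y : dna dist f alpha n x y = dna dist f alpha n y x.
Proof. by apply: eq_bigr => i _; rewrite dist_sym. Qed.

Lemma dna_tri n x y z :
  dna dist f alpha n x z <= dna dist f alpha n x y + dna dist f alpha n y z.
Proof.
apply: dna_le; first by rewrite addr_ge0 // dna_ge0.
move=> i; apply: le_trans (lerD (le_dna n x y i) (le_dna n y z i)).
by rewrite -mulrDr ler_wpM2l ?expR_ge0 // dist_tri.
Qed.

Lemma iter_cont i : d_continuous dist (iter i f).
Proof.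
elim: i => [|i IH] x e e0 /=; first by exists e.
have [d1 d10 h1] := hf (iter i f x) e e0.
have [d2 d20 h2] := IH x d1 d10.
by exists d2 => // y /h2 /h1.
Qed.

Lemma dna_cont n z r : 0 < r -> exists2 del : R, 0 < del &
  forall w, dist z w < del -> dna dist f alpha n z w < r.
Proof.
move=> r0.
suff [del del0 h] : exists2 del : R, 0 < del & forall w, dist z w < del ->
    forall i, (i < n)%N -> expR (alpha * i%:R) * dist (iter i f z) (iter i f w) < r.
  by exists del => // w /h hw; apply: bigmax_lt => // i _; apply: hw.
elim: n => [|n [d1 d10 h1]].
  by exists 1 => // w _ i.
have [d2 d20 h2] := iter_cont n z (r * expR (- (alpha * n%:R))) (mulr_gt0 r0 (expR_gt0 _)).
exists (Num.min d1 d2); first by rewrite lt_min d10 d20.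
move=> w; rewrite lt_min => /andP[/h1 a /h2 b] i; rewrite ltnS leq_eqVlt => /orP[/eqP ->|/a//].
rewrite -(@ltr_pM2l _ (expR (- (alpha * n%:R)))) ?expR_gt0 // mulrA -expRD addNr expR0 mul1r.
by rewrite mulrC.
Qed.

Lemma ball_open n y e : d_open dist (bowen_ball dist f alpha n y e).
Proof.
move=> z /= hz.
have hz' : 0 < e - dna dist f alpha n y z by rewrite subr_gt0.
have [del del0 h] := dna_cont n z _ hz'.
exists del => // w /h hw /=.
rewrite /bowen_ball /=; apply: (le_lt_trans (dna_tri n y z w)); by rewrite -ltrBrDl.
Qed.

End Metric.
Section Seq.
Variable R : realType.
Local Open Scope ereal_scope.
Implicit Types u v : (\bar R)^nat.

Lemma limsupE u : limn_esup u = ereal_inf (range (esups u)).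
Proof. by rewrite limn_esup_lim; apply/cvg_lim => //; exact: cvg_esups_inf. Qed.

Lemma liminfE u : limn_einf u = ereal_sup (range (einfs u)).
Proof. by rewrite limn_einf_lim; apply/cvg_lim => //; exact: cvg_einfs_sup. Qed.

Lemma le_esups u n k : (n <= k)%N -> u k <= esups u n.
Proof. by move=> nk; apply: ereal_sup_ubound; exists k. Qed.

Lemma ge_einfs u n k : (n <= k)%N -> einfs u n <= u k.
Proof. by move=> nk; apply: ereal_inf_lbound; exists k. Qed.

Lemma limsup_lt u (c : \bar R) : limn_esup u < c ->
  exists N, forall n, (N <= n)%N -> u n < c.
Proof.
rewrite limsupE => /ereal_inf_lt [_ [N _ <-]] hN.
by exists N => n Nn; apply: le_lt_trans hN; exact: le_esups.
Qed.

Lemma liminf_gt u (c : \bar R) : c < limn_einf u ->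
  exists N, forall n, (N <= n)%N -> c < u n.
Proof.
rewrite liminfE => /ereal_sup_gt [_ [N _ <-]] hN.
by exists N => n Nn; apply: lt_le_trans hN _; exact: ge_einfs.
Qed.

Lemma le_limsup u v : (forall n, u n <= v n) -> limn_esup u <= limn_esup v.
Proof.
move=> uv; rewrite !limsupE; apply/ereal_infP => _ [N _ <-].
apply: le_trans (ereal_inf_lbound _) _; first by exists N.
by apply: ge_ereal_sup => _ [k Nk <-]; apply: le_trans (uv k) _; exact: le_esups.
Qed.

Lemma le_liminf u v : (forall n, u n <= v n) -> limn_einf u <= limn_einf v.
Proof.
move=> uv; rewrite !liminfE; apply: ge_ereal_sup => _ [N _ <-].
apply: le_trans _ (ereal_sup_ubound _); last by exists N.
by apply/ereal_infP => _ [k Nk <-]; apply: le_trans (uv k); exact: ge_einfs.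
Qed.

Lemma limsup_ge0 u : (forall n, 0 <= u n) -> 0 <= limn_esup u.
Proof.
move=> u0; rewrite limsupE; apply/ereal_infP => _ [N _ <-].
by apply: le_trans (u0 N) _; exact: le_esups.
Qed.

Lemma liminf_ge0 u : (forall n, 0 <= u n) -> 0 <= limn_einf u.
Proof.
move=> u0; rewrite liminfE; apply: le_trans (ereal_sup_ubound _); last by exists 0%N.
by apply/ereal_infP => _ [k _ <-].
Qed.

Lemma lim_right (F : R -> \bar R) :
  {in `]0%R, +oo[%R &, forall x y, (x <= y)%R -> F y <= F x} ->
  lim (F @ 0^'+) = ereal_sup (F @` [set` Interval (BRight 0%R) (BInfty R false)]).
Proof.
move=> h; apply/cvg_lim => //.
have := @nonincreasing_at_right_cvge R F 0%R (BInfty _ false) erefl h.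
by [].
Qed.

End Seq.
Section Entropy.
Variables (R : realType) (dm : measure_display) (X : measurableType dm).
Variables (dist : X -> X -> R) (f : X -> X).
Hypothesis hm : is_metric dist.
Hypothesis hborel : @measurable dm X = <<s [set A | d_open dist A] >>.
Hypothesis hf : d_continuous dist f.
Variable alpha : R.
Local Open Scope ereal_scope.

Lemma ball_meas n y e : measurable (bowen_ball dist f alpha n y e).
Proof. by rewrite hborel; apply: sub_sigma_algebra; exact: ball_open. Qed.

Lemma ball_sub n y e1 e2 : (e1 <= e2)%R ->
  bowen_ball dist f alpha n y e1 `<=` bowen_ball dist f alpha n y e2.
Proof. by move=> e12 z /= h; apply: lt_le_trans e12. Qed.

Lemma rn_ge1 n e : 1 <= rn dist f alpha n e.
Proof.
apply/ereal_infP => _ [E sE <-]; rewrite lee_fin.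
have [y yE _] := sE point.
rewrite ler1n cardfs_gt0; apply/eqP => E0; by rewrite E0 in yE.
Qed.

Lemma rn_anti n e1 e2 : (e1 <= e2)%R -> rn dist f alpha n e2 <= rn dist f alpha n e1.
Proof.
move=> e12; apply/ereal_infP => _ [E sE <-]; apply: ereal_inf_lbound.
exists E => //= x; have [y yE h] := sE x; exists y => //; exact: lt_le_trans e12.
Qed.

Lemma elog_ge0 (r : \bar R) : 1 <= r -> 0 <= elog r.
Proof. by case: r => //= r; rewrite !lee_fin => /ln_ge0. Qed.

Lemma elog_mono (r1 r2 : \bar R) : 1 <= r1 -> r1 <= r2 -> elog r1 <= elog r2.
Proof.
case: r1 => [r1| |] //; case: r2 => [r2| |] //= h1 h12; rewrite ?leey //.
rewrite !lee_fin in h1 h12 *.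
have r10 : (0 < r1)%R by apply: lt_le_trans h1.
by rewrite ler_ln // posrE // (lt_le_trans r10).
Qed.

Definition Hs (e : R) := limn_esup (fun n : nat =>
  (((n%:R)^-1)%:E * elog (rn dist f alpha n e))%E).

Lemma Hs_anti e1 e2 : (e1 <= e2)%R -> Hs e2 <= Hs e1.
Proof.
move=> e12; apply: le_limsup => n; apply: lee_wpmul2l; first by rewrite lee_fin invr_ge0.
by apply: elog_mono; [exact: rn_ge1| exact: rn_anti].
Qed.

Lemma Hs_ge0 e : 0 <= Hs e.
Proof.
apply: limsup_ge0 => n; apply: mule_ge0; first by rewrite lee_fin invr_ge0.
exact/elog_ge0/rn_ge1.
Qed.

Lemma htopE : htop dist f alpha =
  ereal_sup (Hs @` [set` Interval (BRight 0%R) (BInfty R false)]).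
Proof.
by rewrite /htop -lim_right // => x y _ _; exact: Hs_anti.
Qed.

Lemma Hs_le_htop e : (0 < e)%R -> Hs e <= htop dist f alpha.
Proof.
move=> e0; rewrite htopE; apply: ereal_sup_ubound; exists e => //=.
by rewrite in_itv /= e0.
Qed.

Lemma htop_ge0 : 0 <= htop dist f alpha.
Proof. exact: (le_trans (Hs_ge0 1%R) (@Hs_le_htop 1%R (@ltr01 R))). Qed.

Variable mu : probability X R.

Lemma neglog_ge0 (m : \bar R) : 0 <= m -> m <= 1 -> 0 <= neglog m.
Proof.
rewrite /neglog; case: ifP => // _; case: m => //= r; rewrite !lee_fin => r0 r1.
by rewrite oppr_ge0 ln_le0.
Qed.

Lemma neglog_anti (m1 m2 : \bar R) : 0 <= m1 -> m1 <= m2 -> m2 <= 1 -> neglog m2 <= neglog m1.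
Proof.
move=> h1 h12 h2; rewrite /neglog.
have [_|m10] := eqVneq m1 0; first by rewrite /= leey.
case: m1 m10 h1 h12 => [r1| |] m10 h1 h12; last by [].
  2: by have := le_trans h12 h2.
have r10 : (0 < r1)%R.
  by rewrite lt_neqAle eq_sym -lee_fin h1 andbT; apply: contra m10 => /eqP ->.
case: m2 h12 h2 => [r2| |] //= h12 h2; rewrite !lee_fin in h12 h2.
have -> : (r2%:E == 0) = false by rewrite eqe gt_eqF // (lt_le_trans r10).
by rewrite lee_fin lerN2 ler_ln // posrE // (lt_le_trans r10).
Qed.

Definition Ls (x : X) (e : R) := limn_einf (fun n : nat =>
  (((n%:R)^-1)%:E * neglog (mu (bowen_ball dist f alpha n x e)))%E).

Lemma Ls_anti x e1 e2 : (e1 <= e2)%R -> Ls x e2 <= Ls x e1.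
Proof.
move=> e12; apply: le_liminf => n; apply: lee_wpmul2l; first by rewrite lee_fin invr_ge0.
apply: neglog_anti => //; last exact: probability_le1 (ball_meas _ _ _).
by apply: le_measure; rewrite ?inE; [exact: ball_meas|exact: ball_meas|exact: ball_sub].
Qed.

Lemma Ls_ge0 x e : 0 <= Ls x e.
Proof.
apply: liminf_ge0 => n; apply: mule_ge0; first by rewrite lee_fin invr_ge0.
by apply: neglog_ge0 => //; exact: probability_le1 (ball_meas _ _ _).
Qed.

Lemma bkE x : bk_local dist f mu alpha x =
  ereal_sup (Ls x @` [set` Interval (BRight 0%R) (BInfty R false)]).
Proof.
by rewrite /bk_local -lim_right // => a b _ _; exact: Ls_anti.
Qed.

Lemma bk_ge0 x : 0 <= bk_local dist f mu alpha x.
Proof.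
rewrite bkE; apply: le_trans (Ls_ge0 x 1%R) _; apply: ereal_sup_ubound; exists 1%R => //=.
by rewrite in_itv /= ltr01.
Qed.


Lemma mu_bigsetU (s : seq X) (P : pred X) (F : X -> set X) :
  (forall y, measurable (F y)) ->
  mu (\big[setU/set0]_(y <- s | P y) F y) <= \sum_(y <- s | P y) mu (F y).
Proof.
move=> hF; elim: s => [|y s IH]; first by rewrite !big_nil measure0.
rewrite !big_cons; case: ifP => // _.
apply: le_trans (measureU2 _ _ _) _; [exact: hF|exact: bigsetU_measurable|].
exact: leeD2l.
Qed.

Lemma in_bigsetU (s : seq X) (P : pred X) (F : X -> set X) y x :
  y \in s -> P y -> F y x -> (\big[setU/set0]_(i <- s | P i) F i) x.
Proof.
elim: s => [//|z s IH]; rewrite in_cons big_cons => /orP[/eqP <-|ys] Py Fx.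
  by rewrite Py; left.
by case: ifP => _; [right|]; exact: IH.
Qed.

Variable c : R.
Hypothesis hc : forall e : R, (0 < e)%R -> Hs e < c%:E.

Definition sk (k : nat) : R := (c + (k.+1%:R)^-1)%R.
Definition em (m : nat) : R := (m.+1%:R)^-1.

Lemma em_gt0 m : (0 < em m)%R.
Proof. by rewrite /em invr_gt0. Qed.

Definition good m n (E : {fset X}) := spanning dist f alpha n (em m) E /\
  (#|` E|%:R < expR (n%:R * c))%R.

Definition Gset k m n : set X :=
  match pselect (exists E, good m n E) with
  | left h => \big[setU/set0]_(y <- projT1 (cid h) |
       mu (bowen_ball dist f alpha n y (em m)) < (expR (- (n%:R * sk k)))%:E)
       bowen_ball dist f alpha n y (em m)
  | right _ => setT
  end.

Lemma G_meas k m n : measurable (Gset k m n).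
Proof.
rewrite /Gset; case: pselect => [h|_] //.
by apply: bigsetU_measurable => y _; exact: ball_meas.
Qed.

Lemma G_bound k m n : (exists E, good m n E) ->
  mu (Gset k m n) <= (expR (- (n%:R * (k.+1%:R)^-1)))%:E.
Proof.
rewrite /Gset; case: pselect => [h _|//].
case: (cid h) => E [_ cardE] /=.
set a := expR (- (n%:R * sk k)).
apply: le_trans (mu_bigsetU _ _ _ (fun y => ball_meas n y (em m))) _.
apply: le_trans; first by apply: (lee_sum (g := fun=> a%:E)) => y /ltW.
rewrite sumEFin lee_fin big_mkcond /=.
apply: le_trans (_ : (\sum_(i <- E) a <= _)%R).
  by apply: ler_sum => y _; case: ifP => // _; rewrite expR_ge0.
have -> : (\sum_(i <- E) a = #|` E|%:R * a)%R.
  rewrite card_fset_sum1 natr_sum mulr_suml; apply: eq_bigr => i _; by rewrite mul1r.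
apply: le_trans (_ : (expR (n%:R * c) * a <= _)%R).
  by rewrite ler_wpM2r ?expR_ge0 // ltW.
by rewrite /a -expRD /sk mulrDr opprD addrA addrN add0r.
Qed.

Lemma ball_tri n x y (e : R) : (dna dist f alpha n x y < e)%R ->
  bowen_ball dist f alpha n y e `<=` bowen_ball dist f alpha n x (2 * e).
Proof.
move=> hxy z /= hyz.
rewrite /bowen_ball /= in hyz *; apply: (le_lt_trans (@dna_tri _ _ dist f hm alpha n x y z)).
by rewrite mulr2n mulrDl mul1r ltrD.
Qed.

Lemma G_cover k m n x :
  mu (bowen_ball dist f alpha n x (2 * em m)) < (expR (- (n%:R * sk k)))%:E ->
  Gset k m n x.
Proof.
move=> hx; rewrite /Gset; case: pselect => [h|//].
case: (cid h) => E [sE _] /=.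
have [y yE hy] := sE x.
apply: (@in_bigsetU _ _ _ y x yE); last by rewrite /bowen_ball /= dna_sym.
apply: le_lt_trans hx; apply: le_measure; rewrite ?inE; try exact: ball_meas.
exact: ball_tri.
Qed.
Lemma eventually_good m : exists N0, forall n, (N0 <= n)%N -> exists E, good m n E.
Proof.
have [N hN] := @limsup_lt R _ _ (hc (em m) (em_gt0 m)).
exists (maxn N 1) => n; rewrite geq_max => /andP[Nn n1].
have hn := hN n Nn.
have n0 : (0 < n%:R :> R)%R by rewrite ltr0n.
have : rn dist f alpha n (em m) < (expR (n%:R * c))%:E.
  move: hn (rn_ge1 n (em m)); case: (rn dist f alpha n (em m)) => [r| |] //= hn r1.
  - rewrite lte_fin; rewrite -EFinM lte_fin ltr_pdivrMl // in hn.
    rewrite lee_fin in r1.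
    by rewrite -[X in (X < _)%R]lnK ?posrE ?(lt_le_trans ltr01) // ltr_expR.
  - by rewrite mulry gtr0_sg ?invr_gt0 // mul1e in hn.
move/ereal_inf_lt => [_ [E sE <-]]; rewrite lte_fin => hE.
by exists E.
Qed.

Definition Zs k m : set X :=
  \bigcup_N \bigcap_(n in [set n | (N <= n)%N]) Gset k m n.

Lemma I_meas k m N : measurable (\bigcap_(n in [set n | (N <= n)%N]) Gset k m n).
Proof.
apply: bigcap_measurable; first by exists N => /=.
by move=> n _; exact: G_meas.
Qed.

Lemma I_null k m N : mu (\bigcap_(n in [set n | (N <= n)%N]) Gset k m n) = 0.
Proof.
set I := \bigcap_(n in _) _.
have [N0 hN0] := eventually_good m.
have t0 : (0 < ((k.+1%:R)^-1)%R :> R)%R by rewrite invr_gt0.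
set t := ((k.+1%:R)^-1)%R in t0 *.
suff hd : forall d : R, (0 < d)%R -> mu I <= d%:E.
  apply/eqP; rewrite eq_le measure_ge0 andbT.
  have fin : mu I \is a fin_num.
    by rewrite ge0_fin_numE ?measure_ge0 // (le_lt_trans (probability_le1 _ (I_meas k m N))) ?ltey.
  have := fineK fin; set r := fine (mu I) => Er.
  rewrite -Er lee_fin leNgt; apply/negP => r0.
  have := hd (r / 2)%R (divr_gt0 r0 (ltr0n _ 2)); rewrite -Er lee_fin => h.
  lra.
move=> d d0.
set n := maxn (maxn N N0) (Num.Def.trunc ((t * d)^-1)).+1.
have Nn : (N <= n)%N by rewrite /n !leq_max leqnn.
have N0n : (N0 <= n)%N by rewrite /n !leq_max leqnn orbT.
have tn : ((t * d)^-1 < n%:R)%R.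
  apply: lt_le_trans (truncnS_gt _) _; rewrite ler_nat /n leq_max leqnn orbT //.
apply: (@le_trans _ _ (mu (Gset k m n))).
  apply: le_measure; rewrite ?inE; [exact: I_meas|exact: G_meas|].
  by move=> x /(_ n Nn).
apply: le_trans (G_bound k m n (hN0 n N0n)) _; rewrite lee_fin.
have dpos : (0 < d^-1)%R by rewrite invr_gt0.
have h1 : (d^-1 < expR (n%:R * t))%R.
  apply: lt_le_trans (expR_ge1Dx _); apply: lt_le_trans (_ : (n%:R * t <= 1 + n%:R * t)%R);
    last by rewrite lerDr.
  rewrite -(@ltr_pM2r _ t^-1) ?invr_gt0 // -mulrA mulfV ?gt_eqF // mulr1.
  by rewrite -invfM mulrC.
rewrite expRN -[X in (_ <= X)%R]invrK ltW // ltf_pV2 // posrE ?expR_gt0 //.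
Qed.

Lemma Z_negl k m : mu.-negligible (Zs k m).
Proof.
apply: negligible_bigcup => N; exists (\bigcap_(n in [set n | (N <= n)%N]) Gset k m n).
by split => //; [exact: I_meas|exact: I_null].
Qed.

Lemma ext_k (y : \bar R) : c%:E < y -> exists k, (sk k)%:E < y.
Proof.
case: y => [b| |] //; last by exists 0%N; rewrite ltey.
rewrite lte_fin => cb; exists (Num.Def.trunc ((b - c)^-1)).
rewrite lte_fin /sk -ltrBrDl.
have bc : (0 < b - c)%R by rewrite subr_gt0.
rewrite -[X in (_ < X)%R]invrK ltf_pV2 ?posrE ?invr_gt0 ?ltr0n //.
exact: truncnS_gt.
Qed.

Lemma key x : c%:E < bk_local dist f mu alpha x -> exists k m, Zs k m x.
Proof.
move=> /ext_k [k]; rewrite bkE => /ereal_sup_gt [_ [e /= he <-]] hLe.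
rewrite in_itv /= andbT in he.
set m := Num.Def.trunc (2 / e).
have hm2 : (2 * em m <= e)%R.
  rewrite /em -(@ler_pM2r _ (m.+1%:R)) ?ltr0n // -mulrA mulVf ?pnatr_eq0 // mulr1.
  rewrite mulrC -ler_pdivrMr //; apply: ltW; exact: truncnS_gt.
have hL : (sk k)%:E < Ls x (2 * em m) by apply: lt_le_trans hLe (Ls_anti x _ _ hm2).
have [N hN] := @liminf_gt R _ _ hL.
exists k, m, (maxn N 1) => // n; rewrite /= geq_max => /andP[Nn n1].
apply: G_cover.
have := hN n Nn.
have n0 : (0 < n%:R :> R)%R by rewrite ltr0n.
set B := mu _.
have B0 : 0 <= B by exact: measure_ge0.
have B1 : B <= 1 by apply: probability_le1; exact: ball_meas.
rewrite /neglog; have [->|Bn0] := eqVneq B 0; first by rewrite lte_fin expR_gt0.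
move: B0 B1 Bn0; case: B => [r| |] //= r0 r1 rn0 hs.
rewrite lee_fin in r0; have rpos : (0 < r)%R by rewrite lt_neqAle eq_sym r0 andbT; apply: contra rn0 => /eqP ->.
rewrite -EFinM lte_fin ltr_pdivlMl // in hs.
rewrite lte_fin -[X in (X < _)%R]lnK ?posrE // ltr_expR.
by rewrite ltrNr.
Qed.
Lemma Zall_negl : mu.-negligible (\bigcup_k \bigcup_m Zs k m).
Proof. by apply: negligible_bigcup => k; apply: negligible_bigcup => m; exact: Z_negl. Qed.

Import HBNNSimple.

Lemma lower_le : (0 <= c)%R -> lower_bk dist f mu alpha <= c%:E.
Proof.
move=> c0; rewrite /lower_bk ge0_integralTE; last exact: bk_ge0.
apply: ge_ereal_sup => _ [h hh <-].
rewrite -integralT_nnsfun.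
apply: (@le_trans _ _ (\int[mu]_x (cst c%:E) x)); last first.
  rewrite integral_cst // -[X in _ <= X]mule1; apply: lee_wpmul2l; first by rewrite lee_fin.
  by apply: probability_le1.
apply: ae_ge0_le_integral => //.
- by move=> x _; rewrite lee_fin; exact: fun_ge0.
- by apply/measurable_EFinP; exact: measurable_funP.
- move: Zall_negl; rewrite /negligible => -[A [mA muA sA]]; exists A; split => //.
  apply: subset_trans sA => x /= hx.
  have : c%:E < bk_local dist f mu alpha x.
    apply: lt_le_trans (hh x); rewrite ltNge; apply/negP => hc'; apply: hx => _; exact: hc'.
  by move/key => [k [m hz]]; exists k => //; exists m.
Qed.
End Entropy.

Theorem theorem4p4 (R : realType) (dm : measure_display) (X : measurableType dm)
  (dist : X -> X -> R) (f : X -> X)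
  (hmetric : is_metric dist) (hcompact : d_compact dist)
  (hborel : @measurable dm X = <<s [set A | d_open dist A] >>)
  (hf : d_continuous dist f)
  (alpha : R) (halpha : 0 < alpha) :
  (ereal_sup [set lower_bk dist f mu alpha
               | mu in @Minv R dm X f]
   <= htop dist f alpha)%E.
Proof.
apply: ge_ereal_sup => _ [mu _ <-].
have H0 := @htop_ge0 R dm X dist f alpha.
suff hall : forall c : R, (htop dist f alpha < c%:E)%E ->
    (lower_bk dist f mu alpha <= c%:E)%E.
  move: hall H0; case: (htop dist f alpha) => [r| |] hall H0.
  - apply/lee_addgt0Pr => e e0; rewrite -EFinD; apply: hall.
    by rewrite lte_fin ltrDl.
  - by rewrite leey.
  - by [].
move=> c hc.
apply: (@lower_le R dm X dist f hmetric hborel hf alpha mu c).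
  by move=> e e0; apply: le_lt_trans (@Hs_le_htop R dm X dist f alpha e e0) hc.
by rewrite -lee_fin; apply: le_trans H0 (ltW hc).
Qed.
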